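(* Let $\ell$ be a positive odd integer with at most $t$ distinct prime factors. Suppose that for $i=1,\dots,s$ there are primes $p_{i,1}<p_{i,2}<\cdots<p_{i,t+1}$ with $p_{i,1}\ge 3$, such that for each $i$ any two of $p_{i,1}-1,\dots,p_{i,t+1}-1$ have no common odd prime factor, and such that $p_{i+1,t+1}<2p_{i,1}$ for $1\le i\le s-1$. Then for every integer $n$ with $p_{1,t+1}-1\le n\le 2p_{s,1}-2$, $\Omega_\ell(n)$ is not a powerful number.
   Context: A positive integer $a$ is called a powerful number if for every prime $p$, $p\mid a$ implies $p^2\mid a$. $\Omega_\ell(n)=\prod_{a=1}^{n}(a^\ell+1)$. *)

(* Defs.v *)
From mathcomp Require Import all_boot.
Set Implicit Arguments. Unset Strict Implicit. Unset Printing Implicit Defensive.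

Definition powerful (a : nat) : Prop :=
  0 < a /\ forall p : nat, prime p -> p %| a -> p ^ 2 %| a.

Definition Omega (l n : nat) : nat := \prod_(1 <= a < n.+1) (a ^ l + 1).

(* Main.v *)
Require Import Defs.
From mathcomp Require Import all_boot all_order all_algebra ring zify.
Import GRing.Theory Num.Theory.
Open Scope ring_scope.

Lemma kB (P k : nat) : exists q : int,
  (P%:Z - 1) ^+ k - (-1) ^+ k * (1 - k%:Z * P%:Z) = q * P%:Z ^+ 2.
Proof.
elim: k => [|k [q IH]]; first by exists 0; rewrite !expr0; ring.
exists ((P%:Z - 1) * q - (-1) ^+ k * k%:Z).
have -> : (k.+1)%:Z = k%:Z + 1 by rewrite -addn1 PoszD.
have e : (P%:Z - 1) ^+ k = q * P%:Z ^+ 2 + (-1) ^+ k * (1 - k%:Z * P%:Z) by rewrite -IH subrK.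
rewrite !exprS e. ring.
Qed.

Lemma partB (P l : nat) : (0 < P)%N -> odd l -> ~~ (P %| l)%N ->
  (P %| P.-1 ^ l + 1)%N /\ ~~ (P ^ 2 %| P.-1 ^ l + 1)%N.
Proof.
move=> P0 lo Pl.
have [q Eq] := kB P l.
have eX : ((P.-1 ^ l + 1)%N%:Z = (P%:Z - 1) ^+ l + 1).
  by rewrite PoszD -natz natrX natz predn_int.
have sg : (-1) ^+ l = -1 :> int by rewrite -signr_odd lo expr1.
rewrite sg in Eq.
have eX2 : (P.-1 ^ l + 1)%N%:Z = (q * P%:Z + l%:Z) * P%:Z.
  rewrite eX. have -> : (P%:Z - 1) ^+ l = q * P%:Z ^+ 2 + (-1) * (1 - l%:Z * P%:Z) by rewrite -Eq subrK.
  ring.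
split.
  have : (P%:Z %| (P.-1 ^ l + 1)%N%:Z)%Z by rewrite eX2 dvdz_mull.
  by [].
apply/negP => H.
have e2 : (P ^ 2)%N%:Z = P%:Z ^+ 2 by rewrite -natz natrX natz.
have H' : ((P ^ 2)%N%:Z %| (P.-1 ^ l + 1)%N%:Z)%Z by [].
rewrite e2 in H'.
rewrite eX2 expr2 (mulrC P%:Z) in H'.
rewrite dvdz_mul2r in H'; last by rewrite eqz_nat -lt0n.
have H2 : (P%:Z %| l%:Z)%Z.
  have : (P%:Z %| (q * P%:Z + l%:Z) - q * P%:Z)%Z by rewrite rpredB // dvdz_mull.
  by rewrite addrC addKr.
by move: Pl; rewrite -[(P %| l)%N]/((P%:Z %| l%:Z)%Z) H2.
Qed.

Close Scope ring_scope.
Lemma fermat_iter a P v : prime P -> a ^ (v * P.-1 + 1) = a %[mod P].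
Proof.
move=> pP; have P0 := prime_gt0 pP.
elim: v => [|v IH]; first by rewrite mul0n add0n expn1.
have -> : v.+1 * P.-1 + 1 = v * P.-1 + P by rewrite mulSn; lia.
rewrite expnD -modnMmr fermat_little // modnMmr -(expn1 a) -expnD expn1 //.
Qed.

Lemma partA l P a : prime P -> 0 < l -> coprime l P.-1 ->
  P %| P.-1 ^ l + 1 -> P %| a ^ l + 1 -> a = P.-1 %[mod P].
Proof.
move=> pP l0 co h1 h2.
have [u _ hu] := Bezoutl P.-1 l0.
rewrite (eqP co) in hu; case/dvdnP: hu => w hw.
have hl : a ^ l = P.-1 ^ l %[mod P].
  apply/eqP; rewrite -(eqn_modDr 1); apply/eqP.
  by rewrite (eqP h1) (eqP h2).
have hw' : u * P.-1 + 1 = l * w by rewrite addnC hw mulnC.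
rewrite -(fermat_iter a P u pP) -(fermat_iter P.-1 P u pP) hw' !expnM.
by rewrite -modnXm hl modnXm.
Qed.

Lemma core l n P : 0 < l -> odd l -> prime P -> ~~ (P %| l) -> coprime l P.-1 ->
  P.-1 <= n -> n <= 2 * P - 2 -> ~ powerful (Omega l n).
Proof.
move=> l0 lo pP Pl co hn1 hn2 [_ Hpow].
have P1 := prime_gt1 pP.
have [h1 h2] := partB P l (prime_gt0 pP) lo Pl.
have E : Omega l n = (P.-1 ^ l + 1) *
   \prod_(a <- index_iota 1 n.+1 | a != P.-1) (a ^ l + 1).
  rewrite /Omega (bigD1_seq P.-1) //= ?mem_index_iota ?iota_uniq //; lia.
have R : ~~ (P %| \prod_(a <- index_iota 1 n.+1 | a != P.-1) (a ^ l + 1)).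
  rewrite big_seq_cond; apply: (big_ind (fun x => ~~ (P %| x))).
  - by rewrite dvdn1; case: eqP P1 => // ->.
  - by move=> x y hx hy; rewrite Euclid_dvdM // negb_or hx hy.
  move=> i /andP [hi hne]; apply/negP => hd.
  have := partA l P i pP l0 co h1 hd.
  rewrite (modn_small (_ : P.-1 < P)); last by lia.
  move=> him; rewrite mem_index_iota in hi.
  have dq := divn_eq i P; rewrite him in dq.
  case: (posnP (i %/ P)) => hk.
    by move: hne; rewrite dq hk mul0n add0n eqxx.
  have : P <= i %/ P * P by rewrite leq_pmull.
  lia.
have hd : P %| Omega l n by rewrite E dvdn_mulr.
have := Hpow P pP hd; rewrite E.
case/dvdnP: h1 => m hm; rewrite hm.
set rest := \prod_(_ <- _ | _) _ in R *.
rewrite mulnAC expnS expn1 dvdn_pmul2r ?prime_gt0 // Euclid_dvdM // (negbTE R) orbF.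
move=> Pm; move: h2; rewrite hm expnS expn1 dvdn_pmul2r ?prime_gt0 // Pm //.
Qed.

Lemma pigeon l t (P : nat -> nat) : odd l -> size (primes l) <= t ->
 (forall j, 1 <= j <= t.+1 -> prime (P j)) ->
 (forall j k, 1 <= j -> j < k -> k <= t.+1 -> P j < P k) ->
 (forall j k q, 1 <= j -> j < k -> k <= t.+1 -> prime q -> odd q ->
     q %| (P j).-1 -> ~~ (q %| (P k).-1)) ->
 P t.+1 < 2 * P 1 ->
 exists j, 1 <= j <= t.+1 /\ all (fun q => ~~ (q %| (P j).-1) && (q != P j)) (primes l).
Proof.
move=> lo hsz hpr hmono hodd hb.
pose bad j := has (fun q => (q %| (P j).-1) || (q == P j)) (primes l).
case: (boolP (has (fun j => ~~ bad j) (iota 1 t.+1))).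
  case/hasP => j hj hbj; exists j; split; first by rewrite mem_iota in hj; lia.
  move: hbj; rewrite /bad -all_predC; apply: sub_all => q; rewrite /= negb_or.
  by [].
move/hasPn => hall.
pose f j := head 0 [seq q <- primes l | (q %| (P j).-1) || (q == P j)].
have fP j : j \in iota 1 t.+1 -> f j \in primes l /\ ((f j %| (P j).-1) || (f j == P j)).
  move=> hj; have := hall j hj; rewrite negbK /bad has_filter /f.
  case E: filter => [|x s] //= _.
  have : x \in [seq q <- primes l | (q %| (P j).-1) || (q == P j)] by rewrite E mem_head.
  by rewrite mem_filter => /andP [a b]; split.
have H : forall j k, j \in iota 1 t.+1 -> k \in iota 1 t.+1 -> j < k -> f j = f k -> False.
  move=> j k hj hk jk e.
  have [q1 c1] := fP j hj; have [_ c2] := fP k hk; rewrite -e in c2.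
  move: hj hk; rewrite !mem_iota => hj hk.
  set q := f j in q1 c1 c2.
  move: q1; rewrite mem_primes => /and3P [pq _ ql].
  have oq : odd q.
    case: (even_prime pq) => // q2; move: ql; rewrite q2 dvdn2 lo //.
  have pj : prime (P j) by apply: hpr; lia.
  have pk : prime (P k) by apply: hpr; lia.
  have jk' : P j < P k by apply: hmono => //; lia.
  have j1 : P 1 <= P j.
    case: (ltngtP 1 j) => h; [apply: ltnW; apply: hmono => //; lia|lia|by rewrite h].
  have kt : P k <= P t.+1.
    case: (ltngtP k t.+1) => h; [apply: ltnW; apply: hmono => //; lia|lia|by rewrite h].
  have gj := prime_gt1 pj; have gk := prime_gt1 pk.
  case/orP: c1 => c1; case/orP: c2 => c2.
  - have : ~~ (q %| (P k).-1) by apply: (hodd j) => //; lia.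
    by rewrite c2.
  - have := dvdn_leq (_ : 0 < (P j).-1) c1; move/eqP: c2 => c2; lia.
  - move/eqP: c1 => c1.
    have ok : odd (P k) by case: (even_prime pk) => // h; lia.
    have o2 : ~~ odd (P k).-1.
      move: ok; rewrite -{1}(prednK (ltnW gk)) /=; exact: id.
    have d2 : 2 * q %| (P k).-1 by rewrite Gauss_dvd ?coprime2n // dvdn2 o2 c2.
    have := dvdn_leq (_ : 0 < (P k).-1) d2; lia.
  - move/eqP: c1 c2 => c1 /eqP c2; lia.
have U : uniq (map f (iota 1 t.+1)).
  rewrite map_inj_in_uniq ?iota_uniq // => j k hj hk e.
  case: (ltngtP j k) => h //; [exfalso; exact: H j k hj hk h e|
    exfalso; exact: H k j hk hj h (esym e)].
have := uniq_leq_size U (_ : {subset map f (iota 1 t.+1) <= primes l}).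
rewrite size_map size_iota => h.
have : t.+1 <= t by apply: leq_trans (h _) hsz; move=> q /mapP [j hj ->]; exact (fP j hj).1.
by rewrite ltnn.
Qed.

Theorem lemma5 (l t s : nat) (p : nat -> nat -> nat)
  (hl_pos : 0 < l) (hl_odd : odd l) (hl_t : size (primes l) <= t)
  (hs : 1 <= s)
  (hprime : forall i j, 1 <= i <= s -> 1 <= j <= t.+1 -> prime (p i j))
  (hincr : forall i j, 1 <= i <= s -> 1 <= j -> j < t.+1 -> p i j < p i j.+1)
  (hge3 : forall i, 1 <= i <= s -> 3 <= p i 1)
  (hodd : forall i j k q, 1 <= i <= s -> 1 <= j -> j < k -> k <= t.+1 ->
          prime q -> odd q -> q %| (p i j).-1 -> ~~ (q %| (p i k).-1))
  (hchain : forall i, 1 <= i -> i <= s.-1 -> p i.+1 t.+1 < 2 * p i 1)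
  (n : nat) (hn1 : (p 1 t.+1).-1 <= n) (hn2 : n <= 2 * p s 1 - 2) :
  ~ powerful (Omega l n).
Proof.
have mono : forall i, 1 <= i <= s -> forall j k, 1 <= j -> j < k -> k <= t.+1 -> p i j < p i k.
  move=> i hi j k hj; elim: k => [|k IH] // hjk hk.
  case: (ltngtP j k) => h.
  - apply: ltn_trans (IH h (ltnW hk)) (hincr i k hi _ hk); lia.
  - lia.
  - by rewrite h; apply: hincr => //; lia.
have ch : forall d m, m + d = s -> 1 <= m -> (p m t.+1).-1 <= n ->
    exists i, 1 <= i <= s /\ (p i t.+1).-1 <= n /\ n <= 2 * p i 1 - 2.
  elim=> [|d IH] m hm h1 h2.
    by exists m; rewrite addn0 in hm; subst m; split => //; lia.
  case: (leqP n (2 * p m 1 - 2)) => h.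
    by exists m; split => //; lia.
  apply: (IH m.+1); [lia|lia|].
  have := hchain m h1 ltac:(lia); lia.
have [i [hi [hn1' hn2']]] : exists i, 1 <= i <= s /\ (p i t.+1).-1 <= n /\ n <= 2 * p i 1 - 2.
  by apply: (ch (s - 1) 1) => //; lia.
have p1 := hge3 i hi.
have bound : p i t.+1 < 2 * p i 1 by lia.
have [j [hj hall]] := pigeon l t (p i) hl_odd hl_t (fun j => hprime i j hi) (mono i hi)
   (fun j k q => hodd i j k q hi) bound.
have pP := hprime i j hi hj.
have gP := prime_gt1 pP.
have lo : p i 1 <= p i j.
  case: (ltngtP 1 j) => h; [apply: ltnW; apply: mono => //; lia|lia|by rewrite h].
have hi2 : p i j <= p i t.+1.
  case: (ltngtP j t.+1) => h; [apply: ltnW; apply: mono => //; lia|lia|by rewrite h].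
apply: (core l n (p i j)) => //; last 2 first.
- lia.
- lia.
- apply/negP => d.
  have : p i j \in primes l by rewrite mem_primes pP hl_pos d.
  by move/(allP hall) => /andP [_]; rewrite eqxx.
- rewrite coprime_has_primes //; last by lia.
  apply/hasPn => q hq /=; apply/negP => hql.
  have /andP [h _] := allP hall q hql.
  by move: hq; rewrite mem_primes => /and3P [_ _ d]; rewrite d in h.
Qed.
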